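(* Let $\mathbb{B}$ be a small bicategory. Then there is an isomorphism of abelian groups $$\mathrm{E}_2^{1,1}\cong\mathrm{Ker}\big(\mathrm{Iso}(\mathbf{Z}(\mathbb{B}))\to \mathrm{Z}(\mathbf{Ho}(\mathbb{B}))\big),$$ where the kernel of the characteristic homomorphism means the set of elements of $\mathrm{Iso}(\mathbf{Z}(\mathbb{B}))$ mapped to the unit of $\mathrm{Z}(\mathbf{Ho}(\mathbb{B}))$ (all such elements are invertible, so this is an abelian group).
   Context: $\mathbb{B}$ is a bicategory with hom-categories $\mathbb{B}(x,y)$, horizontal composition $\otimes\colon\mathbb{B}(y,z)\times\mathbb{B}(x,y)\to\mathbb{B}(x,z)$, identity 1-morphisms $\mathrm{Id}(x)$ and unit identifications $\mathrm{Id}(z)\otimes M\cong M\cong M\otimes\mathrm{Id}(y)$. The Drinfeld center $\mathbf{Z}(\mathbb{B})$ has objects $(P,p)$ with $P=(P(x)\in\mathbb{B}(x,x))_x$ and $p=(p(M)\colon P(y)\otimes M\to M\otimes P(x))_{M\in\mathbb{B}(x,y)}$ natural isomorphisms such that $p(\mathrm{Id}(x))$ is the composite of unit constraints and $p(M\otimes N)=(\mathrm{id}(M)\otimes p(N))(p(M)\otimes\mathrm{id}(N))$ (associators suppressed); morphisms are families $f(x)\colon P(x)\to Q(x)$ with $q(M)(f(y)\otimes\mathrm{id})=(\mathrm{id}\otimes f(x))p(M)$; it is a tensor category under $(P\otimes Q)(x)=P(x)\otimes Q(x)$ with unit $E(x)=\mathrm{Id}(x)$. The classifying category $\mathbf{Ho}(\mathbb{B})$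 has the objects of $\mathbb{B}$ and morphism sets $\mathrm{Iso}\,\mathbb{B}(x,y)$ (isomorphism classes of 1-morphisms); its center $\mathrm{Z}(\mathbf{Ho}(\mathbb{B}))$ is the monoid of families $([P(x)])_x$ with $P(z)\otimes M\cong M\otimes P(y)$ for all $M\in\mathbb{B}(y,z)$. The characteristic homomorphism $\mathrm{Iso}(\mathbf{Z}(\mathbb{B}))\to\mathrm{Z}(\mathbf{Ho}(\mathbb{B}))$ sends $[(P,p)]$ to $([P(x)])_x$. Let $\mathrm{E}_1^{0,1}=\prod_x\mathrm{Aut}(\mathrm{Id}(x))$ and $\mathrm{E}_1^{1,1}=\prod_{y,z}\mathrm{Aut}(\mathrm{id}_{\mathbb{B}(y,z)})$ (natural automorphisms $f=(f(M))$ of identity functors). Let $\mathrm{Z}_1^{1,1}=\{f\in\mathrm{E}_1^{1,1}: f(M\otimes N)=f(M)\otimes f(N)\text{ for all composable }M,N\}$ and $\mathrm{B}_1^{1,1}=\{f: f(M)=(u(z)\otimes\mathrm{id}(M))(\mathrm{id}(M)\otimes u(y)^{-1})\text{ for }M\in\mathbb{B}(y,z),\ u\in\mathrm{E}_1^{0,1}\}$ (using the unit identifications), a subgroup of $\mathrm{Z}_1^{1,1}$. Set $\mathrm{E}_2^{1,1}=\mathrm{Z}_1^{1,1}/\mathrm{B}_1^{1,1}$. *)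

(* Defs.v *)
Set Implicit Arguments.
Unset Strict Implicit.

(* Conventions: [vc b a] is vertical composite "b after a";
   [hc M N] is M (x) N for M : y -> z, N : x -> y. *)
Record Bicat := {
  ob : Type;
  hom : ob -> ob -> Type;
  cell : forall {x y : ob}, hom x y -> hom x y -> Type;
  id2 : forall {x y : ob} (f : hom x y), cell f f;
  vc : forall {x y : ob} {f g h : hom x y}, cell g h -> cell f g -> cell f h;
  vc_assoc : forall x y (f g h k : hom x y) (a : cell h k) (b : cell g h) (c : cell f g),
      vc a (vc b c) = vc (vc a b) c;
  vc_id_l : forall x y (f g : hom x y) (a : cell f g), vc (id2 g) a = a;
  vc_id_r : forall x y (f g : hom x y) (a : cell f g), vc a (id2 f) = a;
  idm : forall x : ob, hom x x;
  hc : forall {x y z : ob}, hom y z -> hom x y -> hom x z;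
  hc2 : forall {x y z : ob} {M M' : hom y z} {N N' : hom x y},
      cell M M' -> cell N N' -> cell (hc M N) (hc M' N');
  hc2_id : forall x y z (M : hom y z) (N : hom x y),
      hc2 (id2 M) (id2 N) = id2 (hc M N);
  hc2_vc : forall x y z (M M' M'' : hom y z) (N N' N'' : hom x y)
      (a : cell M' M'') (b : cell M M') (c : cell N' N'') (d : cell N N'),
      hc2 (vc a b) (vc c d) = vc (hc2 a c) (hc2 b d);
  asc : forall {w x y z : ob} (L : hom y z) (M : hom x y) (N : hom w x),
      cell (hc (hc L M) N) (hc L (hc M N));
  asci : forall {w x y z : ob} (L : hom y z) (M : hom x y) (N : hom w x),
      cell (hc L (hc M N)) (hc (hc L M) N);
  asc_inv1 : forall w x y z (L : hom y z) (M : hom x y) (N : hom w x),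
      vc (asci L M N) (asc L M N) = id2 _;
  asc_inv2 : forall w x y z (L : hom y z) (M : hom x y) (N : hom w x),
      vc (asc L M N) (asci L M N) = id2 _;
  asc_nat : forall w x y z (L L' : hom y z) (M M' : hom x y) (N N' : hom w x)
      (a : cell L L') (b : cell M M') (c : cell N N'),
      vc (asc L' M' N') (hc2 (hc2 a b) c) = vc (hc2 a (hc2 b c)) (asc L M N);
  lu : forall {x y : ob} (M : hom x y), cell (hc (idm y) M) M;
  lui : forall {x y : ob} (M : hom x y), cell M (hc (idm y) M);
  lu_inv1 : forall x y (M : hom x y), vc (lui M) (lu M) = id2 _;
  lu_inv2 : forall x y (M : hom x y), vc (lu M) (lui M) = id2 _;
  lu_nat : forall x y (M M' : hom x y) (a : cell M M'),
      vc a (lu M) = vc (lu M') (hc2 (id2 (idm y)) a);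
  ru : forall {x y : ob} (M : hom x y), cell (hc M (idm x)) M;
  rui : forall {x y : ob} (M : hom x y), cell M (hc M (idm x));
  ru_inv1 : forall x y (M : hom x y), vc (rui M) (ru M) = id2 _;
  ru_inv2 : forall x y (M : hom x y), vc (ru M) (rui M) = id2 _;
  ru_nat : forall x y (M M' : hom x y) (a : cell M M'),
      vc a (ru M) = vc (ru M') (hc2 a (id2 (idm x)));
  pentagon : forall v w x y z (K : hom y z) (L : hom x y) (M : hom w x) (N : hom v w),
      vc (asc K L (hc M N)) (asc (hc K L) M N)
      = vc (hc2 (id2 K) (asc L M N))
           (vc (asc K (hc L M) N) (hc2 (asc K L M) (id2 N)));
  triangle : forall x y z (M : hom y z) (N : hom x y),
      vc (hc2 (id2 M) (lu N)) (asc M (idm y) N) = hc2 (ru M) (id2 N)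
}.


Section Center.
Variable B : Bicat.

Definition iso2 {x y : ob B} {f g : hom x y} (a : cell f g) : Prop :=
  exists b : cell g f, vc b a = id2 f /\ vc a b = id2 g.

(* Raw data of a (candidate) object of the Drinfeld center:
   P(x) : x -> x and p(M) : P(y) (x) M -> M (x) P(x) for M : x -> y. *)
Record ZPre := {
  zP : forall x : ob B, hom x x;
  zp : forall (x y : ob B) (M : hom x y), cell (hc (zP y) M) (hc M (zP x))
}.
Arguments zp _ {x y} _.

Definition ZAx (X : ZPre) : Prop :=
  (forall x y (M : hom x y), iso2 (zp X M)) /\
  (forall x y (M M' : hom x y) (a : cell M M'),
      vc (zp X M') (hc2 (id2 (zP X y)) a) = vc (hc2 a (id2 (zP X x))) (zp X M)) /\
  (forall x, zp X (idm x) = vc (lui (zP X x)) (ru (zP X x))) /\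
  (forall x y z (M : hom y z) (N : hom x y),
      zp X (hc M N)
      = vc (asci M N (zP X x))
          (vc (hc2 (id2 M) (zp X N))
            (vc (asc M (zP X y) N)
              (vc (hc2 (zp X M) (id2 N)) (asci (zP X z) M N))))).

Record ZObj := { zpre :> ZPre; zax : ZAx zpre }.

Definition ZHom (X Y : ZPre) (f : forall x, cell (zP X x) (zP Y x)) : Prop :=
  forall x y (M : hom x y),
    vc (zp Y M) (hc2 (f y) (id2 M)) = vc (hc2 (id2 M) (f x)) (zp X M).
Arguments ZHom : clear implicits.

Definition ZIso (X Y : ZPre) : Prop :=
  exists (f : forall x, cell (zP X x) (zP Y x)) (g : forall x, cell (zP Y x) (zP X x)),
    ZHom X Y f /\ ZHom Y X g /\
    forall x, vc (g x) (f x) = id2 _ /\ vc (f x) (g x) = id2 _.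

Definition ZTensor (X Y : ZPre) : ZPre :=
  {| zP := fun x => hc (zP X x) (zP Y x);
     zp := fun x y M =>
       vc (asc M (zP X x) (zP Y x))
         (vc (hc2 (zp X M) (id2 (zP Y x)))
           (vc (asci (zP X y) M (zP Y x))
             (vc (hc2 (id2 (zP X y)) (zp Y M))
                (asc (zP X y) (zP Y y) M)))) |}.

(* (P,p) lies in the kernel of the characteristic homomorphism:
   [P(x)] = [Id(x)] in Ho(B) for every object x *)
Definition InKer (X : ZPre) : Prop :=
  forall x, exists a : cell (zP X x) (idm x), iso2 a.

(* Elements of E_1^{1,1}: natural automorphisms of the identity functors of
   all hom-categories (the inverse family is carried as data). *)
Record E1 := {
  ef : forall (x y : ob B) (M : hom x y), cell M M;
  efi : forall (x y : ob B) (M : hom x y), cell M M;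
  ef_inv : forall (x y : ob B) (M : hom x y),
      vc (efi M) (ef M) = id2 M /\ vc (ef M) (efi M) = id2 M;
  ef_nat : forall (x y : ob B) (M M' : hom x y) (a : cell M M'), vc (ef M') a = vc a (ef M)
}.
Arguments ef _ {x y} _.
Arguments efi _ {x y} _.

Definition isZ1 (f : E1) : Prop :=
  forall x y z (M : hom y z) (N : hom x y), ef f (hc M N) = hc2 (ef f M) (ef f N).

(* B_1^{1,1}: f(M) = (u(z) (x) id(M)) (id(M) (x) u(y)^{-1}), u in E_1^{0,1},
   using the unit identifications Id(z)(x)M = M = M(x)Id(y). *)
Definition isB1 (h : forall (x y : ob B) (M : hom x y), cell M M) : Prop :=
  exists (u ui : forall x, cell (idm x) (idm x)),
    (forall x, vc (ui x) (u x) = id2 _ /\ vc (u x) (ui x) = id2 _) /\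
    forall y z (M : hom y z),
      h y z M = vc (vc (lu M) (vc (hc2 (u z) (id2 M)) (lui M)))
                   (vc (ru M) (vc (hc2 (id2 M) (ui y)) (rui M))).

(* f and g define the same class in E_2^{1,1} = Z_1/B_1 : f g^{-1} in B_1 *)
Definition B1rel (f g : E1) : Prop :=
  isB1 (fun x y M => vc (ef f M) (efi g M)).

End Center.

Arguments zP {B} _ _.
Arguments zp {B} _ {x y} _.
Arguments ef {B} _ {x y} _.
Arguments efi {B} _ {x y} _.

(* Main.v *)
Require Import Defs.
From Stdlib Require Import ssreflect ClassicalEpsilon.
Set Implicit Arguments.

Section S.
Variable B : Bicat.
Local Notation "a ∘ b" := (vc a b) (at level 38, right associativity).
Local Notation "a ⊗ b" := (hc2 a b) (at level 34).

Lemma c2 [x y : ob B] [f g h : hom x y] [a : cell g h] [b : cell f g] [c : cell f h] :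
  a ∘ b = c -> forall (l : hom x y) (m : cell l f), a ∘ (b ∘ m) = c ∘ m.
Proof. intros H l m; rewrite vc_assoc H; reflexivity. Qed.
Lemma c3 [x y : ob B] [f g h k : hom x y] [a : cell h k] [b : cell g h] [c : cell f g] [d : cell f k] :
  a ∘ (b ∘ c) = d -> forall (l : hom x y) (m : cell l f), a ∘ (b ∘ (c ∘ m)) = d ∘ m.
Proof. intros H l m; rewrite (vc_assoc b) (vc_assoc a) H; reflexivity. Qed.
Lemma c4 [x y : ob B] [f g h k e : hom x y] [a : cell k e] [a' : cell h k] [b : cell g h] [c : cell f g] [d : cell f e] :
  a ∘ (a' ∘ (b ∘ c)) = d -> forall (l : hom x y) (m : cell l f), a ∘ (a' ∘ (b ∘ (c ∘ m))) = d ∘ m.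
Proof. intros H l m; rewrite (vc_assoc b) (vc_assoc a') (vc_assoc a) H; reflexivity. Qed.

Ltac norm := repeat rewrite <- vc_assoc.
Tactic Notation "vrw" uconstr(H) := first [ rewrite H | rewrite (c2 H) | rewrite (c3 H) | rewrite (c4 H) ]; norm; rewrite ?vc_id_l ?vc_id_r; norm.
Ltac simp := norm; repeat (rewrite ?vc_id_l ?vc_id_r ?hc2_id; norm).

Lemma hsplit [x y z : ob B] [M M' : hom y z] [N N' : hom x y] (a : cell M M') (b : cell N N') :
  a ⊗ b = (a ⊗ id2 N') ∘ (id2 M ⊗ b).
Proof. rewrite -hc2_vc vc_id_r vc_id_l; reflexivity. Qed.
Lemma hsplit' [x y z : ob B] [M M' : hom y z] [N N' : hom x y] (a : cell M M') (b : cell N N') :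
  a ⊗ b = (id2 M' ⊗ b) ∘ (a ⊗ id2 N).
Proof. rewrite -hc2_vc vc_id_r vc_id_l; reflexivity. Qed.
Lemma xch [x y z : ob B] [M M' : hom y z] [N N' : hom x y] (a : cell M M') (b : cell N N') :
  (a ⊗ id2 N') ∘ (id2 M ⊗ b) = (id2 M' ⊗ b) ∘ (a ⊗ id2 N).
Proof. rewrite -hsplit -hsplit'; reflexivity. Qed.
Lemma hvcl [x y z : ob B] [M M' M'' : hom y z] (N : hom x y) (a : cell M' M'') (b : cell M M') :
  (a ∘ b) ⊗ id2 N = (a ⊗ id2 N) ∘ (b ⊗ id2 N).
Proof. rewrite -hc2_vc vc_id_l; reflexivity. Qed.
Lemma hvcr [x y z : ob B] (M : hom y z) [N N' N'' : hom x y] (a : cell N' N'') (b : cell N N') :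
  id2 M ⊗ (a ∘ b) = (id2 M ⊗ a) ∘ (id2 M ⊗ b).
Proof. rewrite -hc2_vc vc_id_l; reflexivity. Qed.

Lemma hvcl' [x y z : ob B] [M M' M'' : hom y z] (N : hom x y) (a : cell M' M'') (b : cell M M') :
  (a ⊗ id2 N) ∘ (b ⊗ id2 N) = (a ∘ b) ⊗ id2 N.
Proof. rewrite hvcl. reflexivity. Qed.
Lemma hvcr' [x y z : ob B] (M : hom y z) [N N' N'' : hom x y] (a : cell N' N'') (b : cell N N') :
  (id2 M ⊗ a) ∘ (id2 M ⊗ b) = id2 M ⊗ (a ∘ b).
Proof. rewrite hvcr. reflexivity. Qed.
Lemma lui_nat [x y : ob B] [M M' : hom x y] (a : cell M M') : lui M' ∘ a = (id2 (idm y) ⊗ a) ∘ lui M.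
Proof.
  transitivity (lui M' ∘ (a ∘ (lu M ∘ lui M))); [rewrite lu_inv2 vc_id_r; reflexivity|].
  rewrite (vc_assoc a) lu_nat. simp. vrw (lu_inv1 _). simp. reflexivity.
Qed.
Lemma rui_nat [x y : ob B] [M M' : hom x y] (a : cell M M') : rui M' ∘ a = (a ⊗ id2 (idm x)) ∘ rui M.
Proof.
  transitivity (rui M' ∘ (a ∘ (ru M ∘ rui M))); [rewrite ru_inv2 vc_id_r; reflexivity|].
  rewrite (vc_assoc a) ru_nat. simp. vrw (ru_inv1 _). simp. reflexivity.
Qed.
Lemma asci_nat [w x y z : ob B] [L L' : hom y z] [M M' : hom x y] [N N' : hom w x]
  (a : cell L L') (b : cell M M') (c : cell N N') :
  asci L' M' N' ∘ (a ⊗ (b ⊗ c)) = ((a ⊗ b) ⊗ c) ∘ asci L M N.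
Proof.
  transitivity (asci L' M' N' ∘ ((a ⊗ (b ⊗ c)) ∘ (asc L M N ∘ asci L M N))); [rewrite asc_inv2 vc_id_r; reflexivity|].
  rewrite (vc_assoc (a ⊗ (b ⊗ c))) -asc_nat. simp. vrw (asc_inv1 _ _ _). simp. reflexivity.
Qed.

Lemma rfaith [x y : ob B] [M M' : hom x y] (a b : cell M M') :
  a ⊗ id2 (idm x) = b ⊗ id2 (idm x) -> a = b.
Proof.
  intro H. rewrite -(vc_id_r a) -(vc_id_r b) -(ru_inv2 M) !vc_assoc !ru_nat H; reflexivity.
Qed.
Lemma lfaith [x y : ob B] [M M' : hom x y] (a b : cell M M') :
  id2 (idm y) ⊗ a = id2 (idm y) ⊗ b -> a = b.
Proof.
  intro H. rewrite -(vc_id_r a) -(vc_id_r b) -(lu_inv2 M) !vc_assoc !lu_nat H; reflexivity.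
Qed.
Lemma asc_cancel [w x y z : ob B] [L : hom y z] [M : hom x y] [N : hom w x] {K}
  (a b : cell K (hc (hc L M) N)) : asc L M N ∘ a = asc L M N ∘ b -> a = b.
Proof.
  intro H. rewrite -(vc_id_l a) -(vc_id_l b) -(asc_inv1 L M N) -!vc_assoc H; reflexivity.
Qed.

Lemma kellyR [x y z : ob B] (M : hom y z) (N : hom x y) :
  (id2 M ⊗ ru N) ∘ asc M N (idm x) = ru (hc M N).
Proof.
  symmetry; apply rfaith, asc_cancel.
  rewrite hvcl. vrw (asc_nat (id2 M) (ru N) (id2 (idm x))).
  rewrite -(triangle N (idm x)) hvcr. norm.
  vrw (eq_sym (pentagon M N (idm x) (idm x))).
  vrw (eq_sym (asc_nat (id2 M) (id2 N) (lu (idm x)))).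
  rewrite hc2_id. vrw (triangle _ _). reflexivity.
Qed.

Lemma rcancel [x y : ob B] [f g h : hom x y] (k : cell f g) (kinv : cell g f) (a b : cell g h) :
  k ∘ kinv = id2 g -> a ∘ k = b ∘ k -> a = b.
Proof.
  intros Hk H. rewrite -(vc_id_r a) -(vc_id_r b) -Hk !vc_assoc H. reflexivity.
Qed.
Lemma asc_nat_l [w x y z : ob B] [L L' : hom y z] (M : hom x y) (N : hom w x) (a : cell L L') :
  asc L' M N ∘ ((a ⊗ id2 M) ⊗ id2 N) = (a ⊗ id2 (hc M N)) ∘ asc L M N.
Proof. rewrite asc_nat hc2_id. reflexivity. Qed.
Lemma asc_nat_r [w x y z : ob B] (L : hom y z) (M : hom x y) [N N' : hom w x] (c : cell N N') :
  asc L M N' ∘ (id2 (hc L M) ⊗ c) = (id2 L ⊗ (id2 M ⊗ c)) ∘ asc L M N.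
Proof. rewrite -asc_nat hc2_id. reflexivity. Qed.

Lemma kellyL [x y z : ob B] (M : hom y z) (N : hom x y) :
  lu (hc M N) ∘ asc (idm z) M N = lu M ⊗ id2 N.
Proof.
  apply lfaith.
  apply (rcancel (asc (idm z) (hc (idm z) M) N ∘ (asc (idm z) (idm z) M ⊗ id2 N))
                 ((asci (idm z) (idm z) M ⊗ id2 N) ∘ asci (idm z) (hc (idm z) M) N)).
  { simp. vrw (hvcl' _ _ _). rewrite asc_inv2 hc2_id. simp. rewrite asc_inv2. reflexivity. }
  rewrite hvcr. norm. vrw (eq_sym (pentagon (idm z) (idm z) M N)).
  vrw (triangle _ _). vrw (eq_sym (asc_nat_l M N (ru (idm z)))).
  rewrite -triangle hvcl. norm. vrw (asc_nat _ _ _). reflexivity.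
Qed.

Lemma lcancel [x y : ob B] [f g h : hom x y] (k : cell g h) (kinv : cell h g) (a b : cell f g) :
  kinv ∘ k = id2 g -> k ∘ a = k ∘ b -> a = b.
Proof.
  intros Hk H. rewrite -(vc_id_l a) -(vc_id_l b) -Hk -!vc_assoc H. reflexivity.
Qed.
Lemma lu_II [x y : ob B] (M : hom x y) : lu (hc (idm y) M) = id2 (idm y) ⊗ lu M.
Proof.
  apply (lcancel (lu M) (lui M)); first by rewrite lu_inv1.
  rewrite lu_nat. reflexivity.
Qed.
Lemma ru_II [x y : ob B] (M : hom x y) : ru (hc M (idm x)) = ru M ⊗ id2 (idm x).
Proof.
  apply (lcancel (ru M) (rui M)); first by rewrite ru_inv1.
  rewrite ru_nat. reflexivity.
Qed.
Lemma kellyU (x : ob B) : lu (idm x) = ru (idm x).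
Proof.
  apply rfaith. rewrite -triangle -kellyL lu_II. reflexivity.
Qed.
Lemma kellyUi (x : ob B) : lui (idm x) = rui (idm x).
Proof.
  apply (lcancel (lu (idm x)) (lui (idm x))); first by rewrite lu_inv1.
  rewrite lu_inv2 kellyU ru_inv2. reflexivity.
Qed.

Lemma kellyRi [x y z : ob B] (M : hom y z) (N : hom x y) :
  asci M N (idm x) ∘ (id2 M ⊗ rui N) = rui (hc M N).
Proof.
  apply (lcancel (ru (hc M N)) (rui (hc M N))); first by rewrite ru_inv1.
  rewrite ru_inv2 -kellyR. simp. vrw (asc_inv2 _ _ _). vrw (hvcr' _ _ _). rewrite ru_inv2 hc2_id. reflexivity.
Qed.
Lemma kellyL' [x y z : ob B] (M : hom y z) (N : hom x y) :
  lu (hc M N) = (lu M ⊗ id2 N) ∘ asci (idm z) M N.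
Proof.
  rewrite -kellyL. simp. rewrite asc_inv2 vc_id_r. reflexivity.
Qed.

Lemma qhex [x y z : ob B] (M : hom y z) (N : hom x y) :
  rui (hc M N) ∘ lu (hc M N) =
  asci M N (idm x) ∘ (id2 M ⊗ (rui N ∘ lu N)) ∘ asc M (idm y) N ∘ ((rui M ∘ lu M) ⊗ id2 N) ∘ asci (idm z) M N.
Proof.
  rewrite hvcr hvcl. norm. vrw (triangle _ _). vrw (hvcl' _ _ _). rewrite ru_inv2 hc2_id vc_id_l.
  rewrite kellyL'. vrw (kellyRi _ _). reflexivity.
Qed.

Lemma efK (f : E1 B) [x y : ob B] (M : hom x y) : efi f M ∘ ef f M = id2 M.
Proof. exact (proj1 (ef_inv f M)). Qed.
Lemma efK' (f : E1 B) [x y : ob B] (M : hom x y) : ef f M ∘ efi f M = id2 M.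
Proof. exact (proj2 (ef_inv f M)). Qed.
Lemma efi_nat (f : E1 B) [x y : ob B] [M M' : hom x y] (a : cell M M') : efi f M' ∘ a = a ∘ efi f M.
Proof.
  transitivity (efi f M' ∘ (a ∘ (ef f M ∘ efi f M))); [rewrite efK' vc_id_r; reflexivity|].
  rewrite (vc_assoc a) -ef_nat. simp. vrw (efK _ _). reflexivity.
Qed.

Lemma efI (f : E1 B) : isZ1 f -> forall x : ob B, ef f (idm x) = id2 (idm x).
Proof.
  intros Hf x.
  assert (H1 : ru (idm x) ∘ (id2 (idm x) ⊗ ef f (idm x)) = ru (idm x)).
  { apply (lcancel (ef f (idm x)) (efi f (idm x))); first by rewrite efK.
    rewrite [RHS](ef_nat f (ru (idm x))) Hf (hsplit (ef f (idm x)) (ef f (idm x))). norm. vrw (eq_sym (ru_nat _)). reflexivity. }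
  assert (H2 : id2 (idm x) ⊗ ef f (idm x) = id2 _).
  { apply (lcancel (ru (idm x)) (rui (idm x))); first by rewrite ru_inv1.
    rewrite H1 vc_id_r. reflexivity. }
  apply (rcancel (lu (idm x)) (lui (idm x))); first by rewrite lu_inv2.
  rewrite lu_nat H2 !vc_id_r vc_id_l. reflexivity.
Qed.

Definition Phi0 (f : E1 B) : ZPre B :=
  {| zP := fun x => idm x; zp := fun x y M => rui M ∘ (ef f M ∘ lu M) |}.

Lemma pf_l (f : E1 B) [x y : ob B] (M : hom x y) :
  rui M ∘ (ef f M ∘ lu M) = (ef f M ⊗ id2 (idm x)) ∘ (rui M ∘ lu M).
Proof. rewrite (c2 (rui_nat (ef f M))). norm. reflexivity. Qed.
Lemma pf_r (f : E1 B) [x y : ob B] (M : hom x y) :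
  rui M ∘ (ef f M ∘ lu M) = rui M ∘ (lu M ∘ (id2 (idm y) ⊗ ef f M)).
Proof. rewrite lu_nat. reflexivity. Qed.

Lemma hex_mid (f : E1 B) [x y z : ob B] (M : hom y z) (N : hom x y) :
  asci M N (idm x) ∘ (id2 M ⊗ (rui N ∘ (ef f N ∘ lu N))) ∘ asc M (idm y) N
     ∘ ((rui M ∘ (ef f M ∘ lu M)) ⊗ id2 N) ∘ asci (idm z) M N
  = ((id2 M ⊗ ef f N) ⊗ id2 (idm x)) ∘ (rui (hc M N) ∘ lu (hc M N) ∘ (id2 (idm z) ⊗ (ef f M ⊗ id2 N))).
Proof.
  rewrite (pf_l f N) (pf_r f M) !hvcr !hvcl. norm.
  vrw (asci_nat (id2 M) (ef f N) (id2 (idm x))).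
  rewrite -(asci_nat (id2 (idm z)) (ef f M) (id2 N)).
  vrw (qhex M N). rewrite !hvcr !hvcl. norm. reflexivity.
Qed.
Lemma hex_mid2 (f : E1 B) [x y z : ob B] (M : hom y z) (N : hom x y) :
  rui (hc M N) ∘ ((ef f M ⊗ ef f N) ∘ lu (hc M N))
  = ((id2 M ⊗ ef f N) ⊗ id2 (idm x)) ∘ (rui (hc M N) ∘ lu (hc M N) ∘ (id2 (idm z) ⊗ (ef f M ⊗ id2 N))).
Proof.
  rewrite (hsplit' (ef f M) (ef f N)). norm.
  vrw (rui_nat (id2 M ⊗ ef f N)). vrw (lu_nat (ef f M ⊗ id2 N)). reflexivity.
Qed.

Lemma Phi0_ax (f : E1 B) : isZ1 f -> ZAx (Phi0 f).
Proof.
  intro Hf. split; [|split; [|split]]; simpl.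
  - intros x y M. exists (lui M ∘ (efi f M ∘ ru M)). split; simp.
    + vrw (ru_inv2 _). vrw (efK _ _). apply lu_inv1.
    + vrw (lu_inv2 _). vrw (efK' _ _). apply ru_inv1.
  - intros x y M M' a. norm. vrw (eq_sym (lu_nat a)). vrw (ef_nat f a). vrw (rui_nat a). reflexivity.
  - intros x. rewrite efI // vc_id_l kellyU kellyUi. reflexivity.
  - intros x y z M N. rewrite Hf hex_mid2. symmetry. norm. rewrite -hex_mid. norm. reflexivity.
Qed.

Lemma Z1_of_hex (f : E1 B) :
  (forall (x y z : ob B) (M : hom y z) (N : hom x y),
    rui (hc M N) ∘ (ef f (hc M N) ∘ lu (hc M N)) =
    asci M N (idm x) ∘ (id2 M ⊗ (rui N ∘ (ef f N ∘ lu N))) ∘ asc M (idm y) N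
     ∘ ((rui M ∘ (ef f M ∘ lu M)) ⊗ id2 N) ∘ asci (idm z) M N) -> isZ1 f.
Proof.
  intros H x y z M N. apply rfaith.
  apply (rcancel (rui (hc M N) ∘ lu (hc M N)) (lui (hc M N) ∘ ru (hc M N))).
  { simp. vrw (lu_inv2 _). apply ru_inv1. }
  norm. vrw (eq_sym (rui_nat (ef f (hc M N)))). vrw (eq_sym (rui_nat (ef f M ⊗ ef f N))). rewrite H hex_mid -hex_mid2. reflexivity.
Qed.

Lemma ZHom_inv (X Y : ZPre B) (f : forall x, cell (zP X x) (zP Y x)) (g : forall x, cell (zP Y x) (zP X x)) :
  ZHom f -> (forall x, g x ∘ f x = id2 _ /\ f x ∘ g x = id2 _) -> ZHom g.
Proof.
  intros Hf Hg x y M.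
  transitivity ((id2 M ⊗ g x) ∘ (id2 M ⊗ f x) ∘ zp X M ∘ (g y ⊗ id2 M)).
  { vrw (hvcr' M (g x) (f x)). rewrite (proj1 (Hg x)) hc2_id vc_id_l. reflexivity. }
  vrw (eq_sym (Hf x y M)). vrw (hvcl' M (f y) (g y)). rewrite (proj2 (Hg y)) hc2_id vc_id_r. reflexivity.
Qed.

Lemma clause2 (X : ZPre B) : ZAx X -> InKer X -> exists f, isZ1 f /\ ZIso X (Phi0 f).
Proof.
  intros [Hiso [Hnat [Hunit Hhex]]] HK.
  assert (Ha : forall x, {a : cell (zP X x) (idm x) & {ai : cell (idm x) (zP X x) | ai ∘ a = id2 _ /\ a ∘ ai = id2 _}}).
  { intro x. destruct (constructive_indefinite_description _ (HK x)) as [a Ha].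
    destruct (constructive_indefinite_description _ Ha) as [ai Hai]. exact (existT _ a (exist _ ai Hai)). }
  assert (Hp : forall x y (M : hom x y), {b : cell (hc M (zP X x)) (hc (zP X y) M) | b ∘ zp X M = id2 _ /\ zp X M ∘ b = id2 _}).
  { intros x y M. destruct (constructive_indefinite_description _ (Hiso x y M)) as [b Hb]. exact (exist _ b Hb). }
  set a := fun x => projT1 (Ha x).
  set ai := fun x => proj1_sig (projT2 (Ha x)).
  assert (Ha1 : forall x, ai x ∘ a x = id2 _) by (intro x; exact (proj1 (proj2_sig (projT2 (Ha x))))).
  assert (Ha2 : forall x, a x ∘ ai x = id2 _) by (intro x; exact (proj2 (proj2_sig (projT2 (Ha x))))).
  set pinv := fun x y (M : hom x y) => proj1_sig (Hp x y M).
  assert (Hp1 : forall x y (M : hom x y), pinv x y M ∘ zp X M = id2 _) by (intros; exact (proj1 (proj2_sig (Hp _ _ M)))).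
  assert (Hp2 : forall x y (M : hom x y), zp X M ∘ pinv x y M = id2 _) by (intros; exact (proj2 (proj2_sig (Hp _ _ M)))).
  clearbody a ai pinv.
  set fF := fun x y (M : hom x y) => ru M ∘ (id2 M ⊗ a x) ∘ zp X M ∘ (ai y ⊗ id2 M) ∘ lui M.
  set fFi := fun x y (M : hom x y) => lu M ∘ (a y ⊗ id2 M) ∘ pinv x y M ∘ (id2 M ⊗ ai x) ∘ rui M.
  unshelve eexists (@Build_E1 B fF fFi _ _).
  - intros x y M. subst fF fFi; simpl. split; simp.
    + vrw (ru_inv1 _). vrw (hvcr' _ _ _). rewrite Ha1 hc2_id vc_id_l. vrw (Hp1 _ _ _).
      vrw (hvcl' _ _ _). rewrite Ha2 hc2_id vc_id_l. apply lu_inv2.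
    + vrw (lu_inv1 _). vrw (hvcl' _ _ _). rewrite Ha1 hc2_id vc_id_l. vrw (Hp2 _ _ _).
      vrw (hvcr' _ _ _). rewrite Ha2 hc2_id vc_id_l. apply ru_inv2.
  - intros x y M M' c. subst fF; simpl. norm.
    vrw (lui_nat c). vrw (xch (ai y) c). vrw (Hnat _ _ _ _ c). vrw (eq_sym (xch c (a x))).
    vrw (eq_sym (ru_nat c)). reflexivity.
  - assert (Hpe : forall x y (M : hom x y), rui M ∘ (fF x y M ∘ lu M) = (id2 M ⊗ a x) ∘ zp X M ∘ (ai y ⊗ id2 M)).
    { intros x y M. rewrite /fF. simp. vrw (ru_inv1 _). rewrite lu_inv1 vc_id_r. reflexivity. }
    split.
    + apply Z1_of_hex. intros x y z M N. simpl. rewrite !Hpe Hhex !hvcr !hvcl. norm.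
      vrw (asci_nat (id2 M) (id2 N) (a x)).
      vrw (eq_sym (asc_nat (id2 M) (ai y) (id2 N))).
      vrw (hvcl' N (id2 M ⊗ ai y) (id2 M ⊗ a y)). rewrite hvcr' Ha1.
      rewrite -(asci_nat (ai z) (id2 M) (id2 N)). simp. reflexivity.
    + exists a, ai. split; [|split].
      * intros x y M. simpl. norm. vrw (Hpe x y M). vrw (hvcl' M (ai y) (a y)). rewrite Ha1. simp. reflexivity.
      * eapply (@ZHom_inv X (Phi0 _) a ai); [|intro x; split; [apply Ha1|apply Ha2]].
        intros x y M. simpl. norm. vrw (Hpe x y M). vrw (hvcl' M (ai y) (a y)). rewrite Ha1. simp. reflexivity.
      * intro x; split; [apply Ha1|apply Ha2].
Qed.

Definition Lw [x y : ob B] (u : cell (idm y) (idm y)) (M : hom x y) : cell M M :=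
  lu M ∘ (u ⊗ id2 M) ∘ lui M.
Definition Rw [x y : ob B] (v : cell (idm x) (idm x)) (M : hom x y) : cell M M :=
  ru M ∘ (id2 M ⊗ v) ∘ rui M.

Lemma L_comm [x y : ob B] (u : cell (idm y) (idm y)) [M M' : hom x y] (c : cell M M') :
  Lw u M' ∘ c = c ∘ Lw u M.
Proof. rewrite /Lw. norm. vrw (lui_nat c). vrw (xch u c). vrw (eq_sym (lu_nat c)). reflexivity. Qed.
Lemma R_comm [x y : ob B] (v : cell (idm x) (idm x)) [M M' : hom x y] (c : cell M M') :
  Rw v M' ∘ c = c ∘ Rw v M.
Proof. rewrite /Rw. norm. vrw (rui_nat c). vrw (eq_sym (xch c v)). vrw (eq_sym (ru_nat c)). reflexivity. Qed.
Lemma L_mul [x y : ob B] (u u' : cell (idm y) (idm y)) (M : hom x y) :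
  Lw u M ∘ Lw u' M = Lw (u ∘ u') M.
Proof. rewrite /Lw. norm. vrw (lu_inv1 _). vrw (hvcl' M u u'). reflexivity. Qed.
Lemma R_mul [x y : ob B] (v v' : cell (idm x) (idm x)) (M : hom x y) :
  Rw v M ∘ Rw v' M = Rw (v ∘ v') M.
Proof. rewrite /Rw. norm. vrw (ru_inv1 _). vrw (hvcr' M v v'). reflexivity. Qed.
Lemma L_id [x y : ob B] (M : hom x y) : Lw (id2 (idm y)) M = id2 M.
Proof. rewrite /Lw hc2_id vc_id_l lu_inv2. reflexivity. Qed.
Lemma R_id [x y : ob B] (M : hom x y) : Rw (id2 (idm x)) M = id2 M.
Proof. rewrite /Rw hc2_id vc_id_l ru_inv2. reflexivity. Qed.

Lemma ruiR [x y : ob B] (v : cell (idm x) (idm x)) (M : hom x y) :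
  rui M ∘ Rw v M = (id2 M ⊗ v) ∘ rui M.
Proof. rewrite /Rw. norm. vrw (ru_inv1 M). reflexivity. Qed.

Lemma clause3 (f g : E1 B) : ZIso (Phi0 f) (Phi0 g) <-> B1rel f g.
Proof.
  split.
  - intros [u [ui [Hu [_ Hinv]]]].
    exists u, ui. split; first exact Hinv.
    intros x y M. change (ef f M ∘ efi g M = Lw (u y) M ∘ Rw (ui x) M).
    assert (Hg : ef g M = Rw (u x) M ∘ ef f M ∘ Lw (ui y) M).
    { transitivity (ru M ∘ (rui M ∘ (ef g M ∘ (lu M ∘ ((u y ⊗ id2 M) ∘ ((ui y ⊗ id2 M) ∘ lui M)))))).
      { vrw (hvcl' M (u y) (ui y)). rewrite (proj2 (Hinv y)) hc2_id vc_id_l lu_inv2 vc_id_r.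
        vrw (ru_inv2 M). reflexivity. }
      rewrite /Rw /Lw. norm.
      pose proof (Hu x y M) as H. simpl in H. rewrite -!vc_assoc in H.
      rewrite (c4 H). norm. reflexivity. }
    apply (rcancel (ef g M) (efi g M)); first by apply efK'.
    norm. vrw (efK g M). rewrite [in RHS]Hg. norm.
    vrw (R_mul (ui x) (u x) M). rewrite (proj1 (Hinv x)) R_id vc_id_l.
    vrw (L_comm (u y) (ef f M)). vrw (L_mul (u y) (ui y) M). rewrite (proj2 (Hinv y)) L_id vc_id_r.
    reflexivity.
  - intros [u [ui [Hinv H]]].
    exists u, ui. split; [|split].
    + intros x y M. simpl.
      assert (Hf : ef f M = Lw (u y) M ∘ Rw (ui x) M ∘ ef g M).
      { transitivity ((ef f M ∘ efi g M) ∘ ef g M); first by rewrite -vc_assoc efK vc_id_r.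
        rewrite (H x y M) /Lw /Rw. norm. reflexivity. }
      rewrite Hf. norm.
      vrw (eq_sym (ruiR (u x) M)). vrw (R_comm (u x) (Lw (u y) M)). vrw (R_mul (u x) (ui x) M).
      rewrite (proj2 (Hinv x)) R_id vc_id_l. vrw (L_comm (u y) (ef g M)). rewrite /Lw. norm.
      vrw (lu_inv1 M). reflexivity.
    + eapply (@ZHom_inv (Phi0 f) (Phi0 g) u ui); last exact Hinv.
      intros x y M. simpl.
      assert (Hf : ef f M = Lw (u y) M ∘ Rw (ui x) M ∘ ef g M).
      { transitivity ((ef f M ∘ efi g M) ∘ ef g M); first by rewrite -vc_assoc efK vc_id_r.
        rewrite (H x y M) /Lw /Rw. norm. reflexivity. }
      rewrite Hf. norm.
      vrw (eq_sym (ruiR (u x) M)). vrw (R_comm (u x) (Lw (u y) M)). vrw (R_mul (u x) (ui x) M).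
      rewrite (proj2 (Hinv x)) R_id vc_id_l. vrw (L_comm (u y) (ef g M)). rewrite /Lw. norm.
      vrw (lu_inv1 M). reflexivity.
    + exact Hinv.
Qed.

Lemma tri_inv [x y z : ob B] (M : hom y z) (N : hom x y) :
  asc M (idm y) N ∘ (rui M ⊗ id2 N) = id2 M ⊗ lui N.
Proof.
  apply (lcancel (id2 M ⊗ lu N) (id2 M ⊗ lui N)); first by rewrite hvcr' lu_inv1 hc2_id.
  rewrite hvcr' lu_inv2 hc2_id. vrw (triangle M N). rewrite hvcl' ru_inv2 hc2_id. reflexivity.
Qed.
Lemma kellyR2 [x y z : ob B] (M : hom y z) (N : hom x y) :
  asc M N (idm x) ∘ rui (hc M N) = id2 M ⊗ rui N.
Proof. rewrite -kellyRi. vrw (asc_inv2 M N (idm x)). reflexivity. Qed.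

Lemma tcoh [x y : ob B] (M : hom x y) :
  asc M (idm x) (idm x) ∘ (rui M ⊗ id2 (idm x)) ∘ (lu M ⊗ id2 (idm x)) ∘ asci (idm y) M (idm x)
   ∘ (id2 (idm y) ⊗ rui M) ∘ (id2 (idm y) ⊗ lu M) ∘ asc (idm y) (idm y) M ∘ (lui (idm y) ⊗ id2 M)
  = (id2 M ⊗ lui (idm x)) ∘ rui M ∘ lu M.
Proof.
  rewrite kellyUi tri_inv. vrw (hvcr' (idm y) (lu M) (lui M)). rewrite lu_inv2 hc2_id vc_id_r.
  vrw (kellyRi (idm y) M). vrw (eq_sym (rui_nat (lu M))). vrw (eq_sym (rui_nat (rui M))).
  vrw (kellyR2 M (idm x)). rewrite kellyUi. reflexivity.
Qed.

Lemma clause4 (f g h : E1 B) :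
  (forall x y (M : hom x y), ef h M = ef f M ∘ ef g M) ->
  ZIso (Phi0 h) (ZTensor (Phi0 f) (Phi0 g)).
Proof.
  intros Hh.
  assert (HZ : ZHom (X := Phi0 h) (Y := ZTensor (Phi0 f) (Phi0 g)) (fun x => lui (idm x))).
  { intros x y M. simpl. rewrite (pf_l f M) (pf_r g M) !hvcr !hvcl Hh. norm.
    vrw (asc_nat_l (idm x) (idm x) (ef f M)).
    vrw (eq_sym (asc_nat_r (idm y) (idm y) (ef g M))).
    rewrite -(xch (lui (idm y)) (ef g M)).
    vrw (rui_nat (ef f M)). vrw (eq_sym (xch (ef f M) (lui (idm x)))).
    vrw (lu_nat (ef g M)).
    f_equal. rewrite !vc_assoc. f_equal. rewrite -!vc_assoc. apply tcoh. }
  exists (fun x => lui (idm x)), (fun x => lu (idm x)). split; [exact HZ|split].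
  - eapply ZHom_inv; first exact HZ. intro x; split; [apply lu_inv2|apply lu_inv1].
  - intro x; split; [apply lu_inv2|apply lu_inv1].
Qed.

Definition idE1 : E1 B.
Proof.
  refine (@Build_E1 B (fun _ _ M => id2 M) (fun _ _ M => id2 M) _ _).
  - intros x y M. split; apply vc_id_l.
  - intros x y M M' a. simpl. rewrite vc_id_l vc_id_r. reflexivity.
Defined.
Lemma idZ1 : isZ1 idE1.
Proof. intros x y z M N. simpl. rewrite hc2_id. reflexivity. Qed.

Definition Phi (f : E1 B) : ZObj B :=
  match excluded_middle_informative (isZ1 f) with
  | left H => Build_ZObj (Phi0_ax H)
  | right _ => Build_ZObj (Phi0_ax idZ1)
  end.
Lemma PhiE (f : E1 B) : isZ1 f -> zpre (Phi f) = Phi0 f.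
Proof. intro H. rewrite /Phi. destruct (excluded_middle_informative (isZ1 f)); [reflexivity|contradiction]. Qed.
End S.

Unset Implicit Arguments.
Theorem proposition3p3 (B : Bicat) :
  exists Phi : E1 B -> ZObj B,
    (forall f, isZ1 f -> InKer (Phi f)) /\
    (forall X : ZObj B, InKer X -> exists f, isZ1 f /\ ZIso X (Phi f)) /\
    (forall f g, isZ1 f -> isZ1 g -> (ZIso (Phi f) (Phi g) <-> B1rel f g)) /\
    (forall f g h : E1 B, isZ1 f -> isZ1 g -> isZ1 h ->
       (forall x y (M : hom x y), ef h M = vc (ef f M) (ef g M)) ->
       ZIso (Phi h) (ZTensor (Phi f) (Phi g))).
Proof.
  exists (Phi (B:=B)). split; [|split; [|split]].
  - intros f Hf. rewrite (PhiE Hf). intro x. exists (id2 (idm x)), (id2 (idm x)). split; apply vc_id_l.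
  - intros X HX. destruct (clause2 (zax X) HX) as [f [Hf Hiso]]. exists f. split; first exact Hf.
    rewrite (PhiE Hf). exact Hiso.
  - intros f g Hf Hg. rewrite (PhiE Hf) (PhiE Hg). apply clause3.
  - intros f g h Hf Hg Hh H. rewrite (PhiE Hf) (PhiE Hg) (PhiE Hh). apply clause4. exact H.
Qed.
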